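(* Let $M_n$ be the $n$-th Motzkin number. Then, as Laurent series in $z$, $$\sum_{n\ge0}M_nz^n=13z^{-1}+14z^{-2}+\left(9z+12+24z^{-1}+21z^{-2}\right)\Psi(z^3)+\left(9z^5+12z^4+10z^3+23z^2+25z+19+14z^{-1}+4z^{-2}\right)\Psi^3(z^3)$$ $$-\left(9z^7+3z^6+24z^5+30z^4+6z^3+21z^2+6z+3+24z^{-1}+12z^{-2}\right)\Psi^5(z^3)\quad\text{modulo }27.$$
   Context: $M_n$ is the number of lattice paths from $(0,0)$ to $(n,0)$ with steps $(1,0),(1,1),(1,-1)$ never going below the $x$-axis; equivalently $\sum_n M_nz^n=\frac{1-z-\sqrt{1-2z-3z^2}}{2z^2}$. $\Psi(z)=\prod_{j\ge0}(1+z^{3^j})$. ''Modulo $27$'' means coefficientwise congruence of Laurent series. *)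

(* Defs.v *)
From mathcomp Require Import all_boot all_order all_algebra.
Set Implicit Arguments. Unset Strict Implicit. Unset Printing Implicit Defensive.
Import GRing.Theory.
Local Open Scope ring_scope.

(* Motzkin numbers via the recurrence equivalent to the generating-function
   equation M(z) = 1 + z M(z) + z^2 M(z)^2 :
   M_0 = 1,  M_{k+1} = M_k + \sum_{i<k} M_i M_{k-1-i}.
   mot_list n = [:: M_0; ...; M_n]. *)
Fixpoint mot_list (n : nat) : seq nat :=
  match n with
  | 0 => [:: 1%N]
  | k.+1 =>
      let s := mot_list k in
      rcons s (nth 0%N s k + \sum_(i < k) nth 0%N s i * nth 0%N s (k.-1 - i))%N
  end.

Definition motzkin (n : nat) : nat := nth 0%N (mot_list n) n.

(* Truncation of Psi(z) = \prod_{j>=0} (1 + z^(3^j)) to its first N factors,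
   as an integer polynomial.  Factors with j >= N only involve powers
   z^(3^N) and higher, so coefficients of degree < 3^N are exact. *)
Definition psi_trunc (N : nat) : {poly int} := \prod_(j < N) (1 + 'X^(3 ^ j)).

Definition psi3_trunc (N : nat) : {poly int} := psi_trunc N \Po 'X^3.

(* z^2 times the right-hand side, with Psi(z^3) replaced by its truncation
   psi3_trunc N; this is an honest polynomial in z. *)
Definition rhs_z2 (N : nat) : {poly int} :=
  let P := psi3_trunc N in
  13%:P * 'X + 14%:P
  + (9%:P * 'X^3 + 12%:P * 'X^2 + 24%:P * 'X + 21%:P) * P
  + (9%:P * 'X^7 + 12%:P * 'X^6 + 10%:P * 'X^5 + 23%:P * 'X^4 + 25%:P * 'X^3
     + 19%:P * 'X^2 + 14%:P * 'X + 4%:P) * P ^+ 3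
  - (9%:P * 'X^9 + 3%:P * 'X^8 + 24%:P * 'X^7 + 30%:P * 'X^6 + 6%:P * 'X^5
     + 21%:P * 'X^4 + 6%:P * 'X^3 + 3%:P * 'X^2 + 24%:P * 'X + 12%:P) * P ^+ 5.

(* Coefficient of z^n in z^2 * \sum_k M_k z^k. *)
Definition motzkin_z2 (n : nat) : nat :=
  match n with 0 | 1 => 0%N | k.+2 => motzkin k end.

(* Main.v *)
Require Import Defs.
From mathcomp Require Import all_boot all_order all_algebra.
From mathcomp Require Import ring zify.
Set Implicit Arguments. Unset Strict Implicit. Unset Printing Implicit Defensive.
Import GRing.Theory.
Local Open Scope ring_scope.
Definition lowzero (R : nzRingType) (m : nat) (p : {poly R}) :=
  forall i, (i < m)%N -> p`_i = 0.

Lemma lz_add (R : nzRingType) m (p q : {poly R}) :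
  lowzero m p -> lowzero m q -> lowzero m (p + q).
Proof. by move=> hp hq i hi; rewrite coefD hp // hq // addr0. Qed.

Lemma lz_sub (R : nzRingType) m (p q : {poly R}) :
  lowzero m p -> lowzero m q -> lowzero m (p - q).
Proof. by move=> hp hq i hi; rewrite coefB hp // hq // subr0. Qed.

Lemma lz_mulr (R : nzRingType) m (p q : {poly R}) :
  lowzero m p -> lowzero m (q * p).
Proof.
move=> hp i hi; rewrite coefM big1 // => j _; rewrite hp ?mulr0 //.
exact: leq_ltn_trans (leq_subr j i) hi.
Qed.

Lemma lz_mull (R : nzRingType) m (p q : {poly R}) :
  lowzero m p -> lowzero m (p * q).
Proof.
move=> hp i hi; rewrite coefM big1 // => j _; rewrite hp ?mul0r //.
have := ltn_ord j; lia.
Qed.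

Lemma lz_Xn (R : nzRingType) m (q : {poly R}) : lowzero m ('X^m * q).
Proof. by move=> i hi; rewrite coefXnM hi. Qed.

Lemma lz_cancel (R : unitRingType) m (a b : {poly R}) :
  lowzero m (a * b) -> b`_0 \is a GRing.unit -> lowzero m a.
Proof.
move=> hab hb.
suff H : forall k i, (i < k)%N -> (i < m)%N -> a`_i = 0 by move=> i; apply: H.
elim=> [//|k IH] i hik him.
have := hab i him; rewrite coefM big_ord_recr /= big1 ?add0r; last first.
  by move=> j _; rewrite (IH j) ?mul0r //; have := ltn_ord j; lia.
rewrite subnn => h.
by rewrite -(mulrK hb (a`_i)) h mul0r.
Qed.
Lemma size_mot n : size (mot_list n) = n.+1.
Proof. by elim: n => //= n IH; rewrite size_rcons IH. Qed.

Lemma nth_mot n i : (i <= n)%N -> nth 0%N (mot_list n) i = motzkin i.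
Proof.
elim: n i => [|n IH] i hi; first by case: i hi.
rewrite leq_eqVlt in hi; case/orP: hi => [/eqP -> //|hi].
by rewrite /= nth_rcons size_mot hi IH.
Qed.

Lemma mot_rec k : motzkin k.+1 =
  (motzkin k + \sum_(i < k) motzkin i * motzkin (k.-1 - i))%N.
Proof.
have -> : motzkin k.+1 = nth 0%N (mot_list k.+1) k.+1 by [].
rewrite [mot_list k.+1]/= nth_rcons size_mot ltnn eqxx.
congr (_ + _)%N; apply: eq_bigr => i _.
by rewrite !nth_mot //; have := ltn_ord i; lia.
Qed.

Lemma motz_lz (R : nzRingType) m :
  lowzero m (\poly_(i < m) ((motzkin_z2 i)%:R : R) * \poly_(i < m) ((motzkin_z2 i)%:R : R)
     + ('X - 1) * \poly_(i < m) ((motzkin_z2 i)%:R : R) + 'X^2).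
Proof.
set F := \poly_(i < m) _ => i hi.
have hF : forall j, (j <= i)%N -> F`_j = (motzkin_z2 j)%:R.
  by move=> j hj; rewrite coef_poly (leq_ltn_trans hj hi).
rewrite coefD coefD mulrBl mul1r coefB coefXM coefXn coefM.
rewrite (eq_bigr (fun j : 'I_i.+1 => (motzkin_z2 j * motzkin_z2 (i - j))%:R)); last first.
  by move=> j _; rewrite !hF ?natrM //; [exact: leq_subr | have := ltn_ord j; lia].
rewrite -natr_sum hF ?leq_pred // hF //.
case: i hi hF => [|[|[|k]]] hi hF.
- by rewrite big_ord1 /= ?(mul0n,muln0,addn0,add0n,subrr,addr0,add0r,subr0,addrN,sub0r,addNr).
- by rewrite !big_ord_recr big_ord0 /= ?(mul0n,muln0,addn0,add0n,subrr,addr0,add0r,subr0,addrN,sub0r,addNr).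
- by rewrite !big_ord_recr big_ord0 /= ?(mul0n,muln0,addn0,add0n,subrr,addr0,add0r,subr0,addrN,sub0r,addNr).
rewrite /=.
have -> : (\sum_(j < k.+4) motzkin_z2 j * motzkin_z2 (k.+3 - j) =
   \sum_(j < k) motzkin j * motzkin (k.-1 - j))%N.
  rewrite big_ord_recl big_ord_recl !big_ord_recr /=.
  have b0 : forall t, bump 0 t = t.+1 by [].
  rewrite !mul0n !add0n !b0 !subSS subSnn subnn /= !muln0 !addn0.
  apply: eq_bigr => j _; rewrite !b0.
  have -> : (k.+3 - j.+2)%N = (k.-1 - j).+2 by have := ltn_ord j; lia.
  by [].
rewrite mot_rec natrD addr0.
by rewrite opprD addNKr subrr.
Qed.
Lemma frob (R : comNzRingType) N (g : nat -> R) : exists s,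
  (\prod_(j < N) (1 + g j)) ^+ 3 = \prod_(j < N) (1 + g j ^+ 3) + 3%:R * s.
Proof.
elim: N => [|N [s IH]]; first by exists 0; rewrite !big_ord0 expr1n mulr0 addr0.
rewrite !big_ord_recr /= exprMn IH.
set P := \prod_(i < N) _.
exists (s * (1 + g N) ^+ 3 + P * (g N + g N ^+ 2)); ring.
Qed.

Lemma phi_prod N : psi3_trunc N = \prod_(j < N) (1 + 'X^(3 ^ j.+1)) :> {poly int}.
Proof.
rewrite /psi3_trunc /psi_trunc.
rewrite (big_morph (comp_poly 'X^3) (comp_poly_multiplicative 'X^3).1 (comp_poly_multiplicative 'X^3).2).
apply: eq_bigr => j _.
by rewrite comp_polyD (comp_poly_multiplicative 'X^3).2 comp_Xn_poly -exprM expnS mulnC.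
Qed.

Lemma phi0 N : (psi3_trunc N).[0] = 1.
Proof.
rewrite phi_prod horner_prod big1 // => j _.
by rewrite hornerD hornerXn hornerC expr0n expn_eq0 /= addr0.
Qed.

Lemma zp27 (a b : int) : (a%:~R : 'Z_27) = b%:~R -> (a = b %[mod 27])%Z.
Proof.
move=> h; apply/eqP; rewrite eqz_mod_dvd.
set c := a - b.
have hc : (c%:~R : 'Z_27) = 0 by rewrite /c intrB h subrr.
apply/dvdz_mod0P.
have h27 : (27%:R : 'Z_27) = 0 by apply: pchar_Zp.
have ge0 : (0 <= (c %% 27)%Z)%R by apply: modz_ge0.
have lt27 : ((c %% 27)%Z < 27)%R by apply: ltz_pmod.
move: hc; rewrite {1}(divz_eq c 27) intrD intrM rmorph_nat h27 mulr0 add0r.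
move: ge0 lt27; case: (c %% 27)%Z => [k|k]; last by [].
move=> _ hk.
have hk' : (k < 27)%N by lia.
rewrite -pmulrn => /(congr1 (fun x : 'Z_27 => nat_of_ord x)).
rewrite val_Zp_nat; last by [].
rewrite (modn_small hk') => ->.
reflexivity.
Qed.
Definition Gexpr (R : comNzRingType) (x f : R) : R :=
  13%:R * x + 14%:R + (9%:R * x^+3 + 12%:R * x^+2 + 24%:R * x + 21%:R) * f + (9%:R * x^+7 + 12%:R * x^+6 + 10%:R * x^+5 + 23%:R * x^+4 + 25%:R * x^+3 + 19%:R * x^+2 + 14%:R * x + 4%:R) * f ^+ 3 - (9%:R * x^+9 + 3%:R * x^+8 + 24%:R * x^+7 + 30%:R * x^+6 + 6%:R * x^+5 + 21%:R * x^+4 + 6%:R * x^+3 + 3%:R * x^+2 + 24%:R * x + 12%:R) * f ^+ 5.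

Definition cA (R : comNzRingType) (x f : R) : R := f^+3 * ((13%:R + 261%:R * x + 2294%:R * x^+2 + (1%:R * 10000%:R + 1626%:R) * x^+3 + (3%:R * 10000%:R + 9105%:R) * x^+4 + (9%:R * 10000%:R + 5414%:R) * x^+5 + (17%:R * 10000%:R + 8723%:R) * x^+6 + (26%:R * 10000%:R + 5688%:R) * x^+7 + (31%:R * 10000%:R + 9305%:R) * x^+8 + (31%:R * 10000%:R + 3708%:R) * x^+9 + (25%:R * 10000%:R + 3778%:R) * x^+10 + (16%:R * 10000%:R + 9928%:R) * x^+11 + (9%:R * 10000%:R + 4903%:R) * x^+12 + (4%:R * 10000%:R + 4778%:R) * x^+13 + (1%:R * 10000%:R + 8161%:R) * x^+14 + 6502%:R * x^+15 + 2102%:R * x^+16 + 603%:R * x^+17 + 147%:R * x^+18 + 26%:R * x^+19 + 3%:R * x^+20) + (13%:R + 282%:R * x + 2646%:R * x^+2 + (1%:R * 10000%:R + 4793%:R) * x^+3 + (5%:R * 10000%:R + 6322%:R) * x^+4 + (15%:R * 10000%:R + 7149%:R) * x^+5 + (33%:R * 10000%:R + 6480%:R) * x^+6 + (57%:R * 10000%:R + 357%:R) * x^+7 + (78%:R * 10000%:R + 2262%:R) * x^+8 + (88%:R * 10000%:R + 1648%:R) * x^+9 + (82%:R * 10000%:R + 5693%:R) * x^+10 + (64%:R * 10000%:R + 8144%:R) * x^+11 + (42%:R * 10000%:R + 9711%:R) * x^+12 + (24%:R * 10000%:R + 2325%:R) * x^+13 + (11%:R * 10000%:R + 6730%:R)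 * x^+14 + (4%:R * 10000%:R + 7841%:R) * x^+15 + (1%:R * 10000%:R + 6371%:R) * x^+16 + 4500%:R * x^+17 + 931%:R * x^+18 + 129%:R * x^+19 + 9%:R * x^+20) * f).
Definition cB (R : comNzRingType) (x f : R) : R := f^+2 * ((- 39%:R - 300%:R * x + 1176%:R * x^+2 + (1%:R * 10000%:R + 6698%:R) * x^+3 + (7%:R * 10000%:R + 1427%:R) * x^+4 + (18%:R * 10000%:R + 3918%:R) * x^+5 + (34%:R * 10000%:R + 1373%:R) * x^+6 + (49%:R * 10000%:R + 3908%:R) * x^+7 + (57%:R * 10000%:R + 8247%:R) * x^+8 + (56%:R * 10000%:R + 4120%:R) * x^+9 + (47%:R * 10000%:R + 616%:R) * x^+10 + (34%:R * 10000%:R + 1754%:R) * x^+11 + (22%:R * 10000%:R + 251%:R) * x^+12 + (12%:R * 10000%:R + 7128%:R) * x^+13 + (6%:R * 10000%:R + 4551%:R) * x^+14 + (2%:R * 10000%:R + 8776%:R) * x^+15 + (1%:R * 10000%:R + 1256%:R) * x^+16 + 3714%:R * x^+17 + 1029%:R * x^+18 + 198%:R * x^+19 + 27%:R * x^+20) + (- 60%:R - 666%:R * x - 3159%:R * x^+2 - 7812%:R * x^+3 - 7614%:R * x^+4 + (1%:R * 10000%:R + 5093%:R) * x^+5 + (7%:R * 10000%:R + 6941%:R) * x^+6 + (17%:R * 10000%:R + 2557%:R) * x^+7 + (26%:R * 10000%:R + 9217%:R) * x^+8 + (32%:R * 10000%:R + 7255%:R) * x^+9 + (32%:R * 10000%:R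 + 7393%:R) * x^+10 + (28%:R * 10000%:R + 935%:R) * x^+11 + (21%:R * 10000%:R + 5451%:R) * x^+12 + (15%:R * 10000%:R + 1875%:R) * x^+13 + (9%:R * 10000%:R + 7227%:R) * x^+14 + (5%:R * 10000%:R + 3667%:R) * x^+15 + (2%:R * 10000%:R + 4003%:R) * x^+16 + 8235%:R * x^+17 + 2046%:R * x^+18 + 333%:R * x^+19 + 27%:R * x^+20) * f).
Definition cC (R : comNzRingType) (x f : R) : R := f * ((- 144%:R - 3348%:R * x - (1%:R * 10000%:R + 6380%:R) * x^+2 - (3%:R * 10000%:R + 2652%:R) * x^+3 - (2%:R * 10000%:R + 2005%:R) * x^+4 + (3%:R * 10000%:R + 6846%:R) * x^+5 + (13%:R * 10000%:R + 8438%:R) * x^+6 + (24%:R * 10000%:R + 9804%:R) * x^+7 + (31%:R * 10000%:R + 4181%:R) * x^+8 + (31%:R * 10000%:R + 5144%:R) * x^+9 + (27%:R * 10000%:R + 6615%:R) * x^+10 + (21%:R * 10000%:R + 5604%:R) * x^+11 + (15%:R * 10000%:R + 7860%:R) * x^+12 + (10%:R * 10000%:R + 9134%:R) * x^+13 + (6%:R * 10000%:R + 3576%:R) * x^+14 + (3%:R * 10000%:R + 2976%:R) * x^+15 + (1%:R * 10000%:R + 5633%:R) * x^+16 + 5976%:R * x^+17 + 2061%:R * x^+18 + 432%:R * x^+19 + 81%:R * x^+20) + (- 108%:R - 1296%:R * x - 7047%:R * x^+2 - (2%:R * 10000%:R + 3004%:R) * x^+3 - (5%:R * 10000%:R + 544%:R)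 * x^+4 - (8%:R * 10000%:R + 190%:R) * x^+5 - (9%:R * 10000%:R + 8577%:R) * x^+6 - (10%:R * 10000%:R + 4490%:R) * x^+7 - (11%:R * 10000%:R + 565%:R) * x^+8 - (12%:R * 10000%:R + 6819%:R) * x^+9 - (14%:R * 10000%:R + 7906%:R) * x^+10 - (15%:R * 10000%:R + 7221%:R) * x^+11 - (14%:R * 10000%:R + 2074%:R) * x^+12 - (10%:R * 10000%:R + 5948%:R) * x^+13 - (6%:R * 10000%:R + 4881%:R) * x^+14 - (3%:R * 10000%:R + 2724%:R) * x^+15 - (1%:R * 10000%:R + 3365%:R) * x^+16 - 4131%:R * x^+17 - 837%:R * x^+18 - 81%:R * x^+19) * f).
Definition cD (R : comNzRingType) (x f : R) : R := (((568%:R - 1904%:R * x - (2%:R * 10000%:R + 2986%:R) * x^+2 - (6%:R * 10000%:R + 3844%:R) * x^+3 - (9%:R * 10000%:R + 4657%:R) * x^+4 - (10%:R * 10000%:R + 6878%:R) * x^+5 - (10%:R * 10000%:R + 1378%:R) * x^+6 - (8%:R * 10000%:R + 462%:R) * x^+7 - (9%:R * 10000%:R + 2271%:R) * x^+8 - (12%:R * 10000%:R + 1724%:R) * x^+9 - (12%:R * 10000%:R + 5213%:R) * x^+10 - (12%:R * 10000%:R + 3390%:R) * x^+11 - (9%:R * 10000%:R + 5740%:R) * x^+12 - (5%:R * 10000%:R + 4418%:R) * x^+13 - (3%:R * 10000%:R + 4608%:R) * x^+14 - (1%:R * 10000%:R + 5626%:R) * x^+15 - 3611%:R * x^+16 -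 1164%:R * x^+17 + 459%:R * x^+18 + 54%:R * x^+19 + 81%:R * x^+20) + 0 * f) + ((624%:R + 2064%:R * x + 216%:R * x^+2 - 5340%:R * x^+3 - 7113%:R * x^+4 - 9108%:R * x^+5 - (1%:R * 10000%:R + 1886%:R) * x^+6 - 8430%:R * x^+7 - (1%:R * 10000%:R + 4049%:R) * x^+8 - (2%:R * 10000%:R + 1786%:R) * x^+9 - (1%:R * 10000%:R + 8510%:R) * x^+10 - (2%:R * 10000%:R + 574%:R) * x^+11 - (1%:R * 10000%:R + 7436%:R) * x^+12 - 9840%:R * x^+13 - 9540%:R * x^+14 - 5568%:R * x^+15 - 2409%:R * x^+16 - 1710%:R * x^+17 - 351%:R * x^+18 - 162%:R * x^+19) + 0 * f) * ((1 + x)^+3 * f^+2 - 1) + ((144%:R + 576%:R * x + 648%:R * x^+2 + 288%:R * x^+3 + 801%:R * x^+4 + 1188%:R * x^+5 + 1170%:R * x^+6 + 2304%:R * x^+7 + 1917%:R * x^+8 + 1116%:R * x^+9 + 2034%:R * x^+10 + 1458%:R * x^+11 + 1422%:R * x^+12 + 1854%:R * x^+13 + 864%:R * x^+14 + 684%:R * x^+15 + 441%:R * x^+16 + 54%:R * x^+17 + 81%:R * x^+18) + 0 * f) * ((1 + x)^+3 * f^+2 - 1)^+2).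

Lemma cert (R : comNzRingType) (x f : R) :
  (1 + x)^+15 * f^+3 * (Gexpr x f ^+ 2 + (x - 1) * Gexpr x f + x^+2) =
  27%:R * cA x f + 9%:R * cB x f * ((1 + x)^+3 * f^+3 - f)
  + 3%:R * cC x f * ((1 + x)^+3 * f^+3 - f)^+2 + cD x f * ((1 + x)^+3 * f^+3 - f)^+3.
Proof. rewrite /Gexpr /cA /cB /cC /cD; ring. Qed.

Lemma n_lt n : (n < 3 ^ n.+2)%N.
Proof. apply: (leq_trans (ltn_expl n (isT : (1 < 3)%N))). by rewrite leq_exp2l // ltnW. Qed.

Lemma intr27 : ((27%:R : int)%:~R : 'Z_27) = 0.
Proof. by rewrite mulrz_nat pchar_Zp. Qed.

Lemma Gexpr_morph (R S : comNzRingType) (h : {rmorphism R -> S}) (x f : R) :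
  h (Gexpr x f) = Gexpr (h x) (h f).
Proof. rewrite /Gexpr !(rmorph_nat, rmorphXn, rmorphM, rmorphB, rmorphN, rmorphD); reflexivity. Qed.


Theorem theorem7p2 (n : nat) :
  ((motzkin_z2 n)%:Z = (rhs_z2 n.+1)`_n %[mod 27])%Z.
Proof.
set N := n.+1.
set m := (3 ^ N.+1)%N.
set phi := psi3_trunc N.
have [s hs] := frob (R := {poly int}) N.+1 (fun j => 'X^(3 ^ j)).
have he : (1 + 'X)^+3 * phi^+3 - phi = 3%:R * s + 'X^m * phi.
  have h1 : \prod_(j < N.+1) (1 + 'X^(3 ^ j)) = (1 + 'X) * phi :> {poly int}.
    by rewrite big_ord_recl expn0 expr1 /phi phi_prod.
  have h2 : \prod_(j < N.+1) (1 + ('X^(3 ^ j))^+3) = phi * (1 + 'X^m) :> {poly int}.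
    rewrite big_ord_recr /= /phi phi_prod; congr (_ * (1 + _)).
      by apply: eq_bigr => j _; rewrite -exprM expnSr.
    by rewrite -exprM /m expnSr.
  move: hs; rewrite h1 h2 exprMn => hs; rewrite hs; ring.
have hc := cert 'X phi.
have hG : rhs_z2 N = Gexpr 'X phi by rewrite /rhs_z2 /Gexpr !polyC_natr.
rewrite he in hc.
move: hc; set G := Gexpr 'X phi; set a := cA 'X phi; set b := cB 'X phi;
  set c := cC 'X phi; set d := cD 'X phi; set w := (1 + 'X) ^+ 15 * phi ^+ 3 => hc.
set K := a + b * s + c * s ^+ 2 + d * s ^+ 3.
set H := phi * (9%:R * b + 18%:R * c * s + 3%:R * c * ('X^m * phi) + 27%:R * d * s ^+ 2
   + 9%:R * d * s * ('X^m * phi) + d * ('X^m * phi) ^+ 2).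
have hc2 : w * (G ^+ 2 + ('X - 1) * G + 'X^2) = 27%:R * K + 'X^m * H.
  by rewrite hc /K /H; ring.
have hw0 : w`_0 = 1.
  by rewrite -horner_coef0 /w hornerM !horner_exp hornerD hornerX -polyC1 hornerC phi0 addr0 !expr1n mulr1.
have hG0 : G`_0 = 27%:R.
  have := Gexpr_morph (horner_eval (0:int)) 'X phi.
  rewrite /= !horner_evalE hornerX phi0 -horner_coef0 => ->.
  rewrite /Gexpr; ring.
have hG' : rhs_z2 N = G by rewrite hG.
clearbody w G K H.
have h27 : (27%:R : 'Z_27) = 0 by apply: pchar_Zp.
have h27p : (27%:R : {poly 'Z_27}) = 0 by rewrite -polyC_natr h27.
pose pi : {rmorphism {poly int} -> {poly 'Z_27}} := map_poly (intr : int -> 'Z_27).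
have piX : pi 'X = 'X by rewrite /= map_polyX.
have hpi : pi w * (pi G ^+ 2 + ('X - 1) * pi G + 'X^2) = 'X^m * pi H.
  have := congr1 pi hc2.
  rewrite rmorphD rmorphM [pi (27%:R * K)]rmorphM rmorph_nat h27p mul0r add0r.
  rewrite rmorphM rmorphXn piX => <-.
  by rewrite !(rmorphXn, rmorphD, rmorphN, rmorphM, rmorph1) piX.
set F := \poly_(i < m) ((motzkin_z2 i)%:R : 'Z_27).
have hF := @motz_lz 'Z_27 m.
have hdiff : lowzero m ((pi G - F) * (pi w * (pi G + F + 'X - 1))).
  have -> : (pi G - F) * (pi w * (pi G + F + 'X - 1)) =
     pi w * (pi G ^+ 2 + ('X - 1) * pi G + 'X^2) - pi w * (F * F + ('X - 1) * F + 'X^2) by ring.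
  rewrite hpi; apply: lz_sub; [exact: lz_Xn | exact: lz_mulr hF].
have pw0 : (pi w)`_0 = 1.
  by rewrite /= coef_map hw0; exact: mulr1z.
have picoef : forall (p : {poly int}) i, (pi p)`_i = (p`_i)%:~R.
  by move=> p i; rewrite /= coef_map.
have pG0 : (pi G)`_0 = 0 by rewrite picoef hG0 intr27.
have F0 : F`_0 = 0 by rewrite /F coef_poly expn_gt0.
have hunit : (pi w * (pi G + F + 'X - 1))`_0 \is a GRing.unit.
  rewrite coef0M pw0 mul1r coefB coefD coefD pG0 F0 coefX coef1 /=.
  by rewrite !add0r unitrN unitr1.
have hlz := lz_cancel hdiff hunit.
have hn : (n < m)%N := n_lt n.
have := hlz n hn; rewrite coefB picoef /F coef_poly hn => /eqP; rewrite subr_eq0 => /eqP h.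
apply: zp27; rewrite hG' h.
by rewrite -pmulrn.
Qed.
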